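(* Let $K\ge1$, $n\ge0$ be integers and $\varepsilon\in(0,1)$. Consider standard percolation on $\mathbb{Z}_K$ in which each horizontal and each vertical edge is open independently with probability $1-\varepsilon$, and let $D^K(n,0)$ be the graph distance from $(0,0)$ to $(n,0)$ using open edges of $\mathbb{Z}_K$. Let $A=A(K,n,\varepsilon)$ be the event that in each unit square of $[\![0,n]\!]\times[\![-K,K]\!]$ (i.e. with vertices $(i,j),(i+1,j),(i,j+1),(i+1,j+1)$) at most one of its four edges is closed. Then \[ \mathbf{E}\big(D^K(n,0)\,\big|\,A\big)\le \mathbf{E}\big(D^{K,d}(n,0)\big)+3K. \]
   Context: $\mathbb{Z}_K=\mathbb{Z}\times[\![-K,K]\!]$ with vertical edges $(i,j)\to(i,j+1)$ and horizontal edges $(i,j)\to(i+1,j)$, each of length $1$. $D^{K,d}(n,0)$ refers to the Cross Model with the same $K,\varepsilon$: $\mathbb{Z}_K$ with additionally diagonal edges $(i,j)\to(i+1,j\pm1)$ of length $2$, where all vertical and diagonal edges are open and each horizontal edge is open with probability $1-\varepsilon$ independently (vertical and horizontal edges of length $1$); $D^{K,d}(n,0)$ is the length of a shortest open path in this model from $(0,0)$ to $(n,0)$. *)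

(* Defs.v *)
From HB Require Import structures.
From mathcomp Require Import all_boot all_order all_algebra.
From mathcomp Require Import all_classical all_reals all_analysis.
Set Implicit Arguments. Unset Strict Implicit. Unset Printing Implicit Defensive.
Import Order.TTheory GRing.Theory Num.Theory.
Local Open Scope classical_set_scope.
Local Open Scope ring_scope.

(* Vertices of Z x Z (Z_K is the part with rows in [-K,K]). *)
Definition vtx := (int * int)%type.

(* An edge of the square lattice: (true, i, j) is the horizontal edge
   (i,j)-(i+1,j); (false, i, j) is the vertical edge (i,j)-(i,j+1). *)
Definition edge := (bool * int * int)%type.

Definition inrow (K : nat) (j : int) : bool := (- (K%:Z) <= j) && (j <= K%:Z).

Definition inZK (K : nat) (e : edge) : bool :=
  let: (h, i, j) := e in
  if h then inrow K j else inrow K j && inrow K (j + 1).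

Definition is_horizontal (e : edge) : bool := e.1.1.

Definition edge_of (u v : vtx) : option edge :=
  if (v.1 == u.1 + 1) && (v.2 == u.2) then Some (true, u.1, u.2)
  else if (u.1 == v.1 + 1) && (u.2 == v.2) then Some (true, v.1, v.2)
  else if (v.1 == u.1) && (v.2 == u.2 + 1) then Some (false, u.1, u.2)
  else if (u.1 == v.1) && (u.2 == v.2 + 1) then Some (false, v.1, v.2)
  else None.

(* Standard percolation on Z_K: a step along an open edge of Z_K (w e = true means open) *)
Definition std_step (K : nat) (w : edge -> bool) : rel vtx :=
  fun u v => if edge_of u v is Some e then inZK K e && w e else false.

Definition is_diag (u v : vtx) : bool :=
  (`|v.1 - u.1| == 1) && (`|v.2 - u.2| == 1).
Definition diag_step (K : nat) : rel vtx :=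
  fun u v => is_diag u v && inrow K u.2 && inrow K v.2.

(* Cross Model: horizontal edges open according to w, vertical and diagonal
   edges always open. *)
Definition cross_step (K : nat) (w : edge -> bool) : rel vtx :=
  fun u v =>
    (if edge_of u v is Some e then inZK K e && (if is_horizontal e then w e else true)
     else false) || diag_step K u v.

Definition cross_wt (u v : vtx) : nat := if is_diag u v then 2 else 1.
Definition unit_wt (u v : vtx) : nat := 1.

(* Weighted graph distance: infimum of the lengths of step-paths from a to b
   (+oo if there is none). A path is a :: p, its length the sum of the
   weights of its consecutive steps. *)
Definition wdist (R : realType) (step : rel vtx) (wt : vtx -> vtx -> nat)
    (a b : vtx) : \bar R :=
  ereal_inf [set ((sumn (pairmap wt a p))%:R)%:E
            | p in [set p : seq vtx | path step a p /\ last a p = b]].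

Definition DK (R : realType) (K n : nat) (w : edge -> bool) : \bar R :=
  wdist R (std_step K w) unit_wt (0, 0) (n%:Z, 0).

Definition DKd (R : realType) (K n : nat) (w : edge -> bool) : \bar R :=
  wdist R (cross_step K w) cross_wt (0, 0) (n%:Z, 0).

Definition goodA (K n : nat) (w : edge -> bool) : Prop :=
  forall (i : nat) (j : int), (i < n)%N -> - (K%:Z) <= j -> j < K%:Z ->
    ((~~ w (true, i%:Z, j)) + (~~ w (true, i%:Z, (j + 1)%R))
     + (~~ w (false, i%:Z, j)) + (~~ w (false, (i%:Z + 1)%R, j)) <= 1)%N.

(* The family X (X e x = true iff edge e is open) is, on the edges satisfying S,
   an independent family of Bernoulli(p) variables. *)
Definition iid_bernoulli d (T : measurableType d) (R : realType)
    (P : probability T R) (S : pred edge) (p : R) (X : edge -> T -> bool) : Prop :=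
  (forall e, measurable [set x | X e x]) /\
  forall (s : seq edge) (b : edge -> bool), uniq s -> all S s ->
    P [set x | forall e, e \in s -> X e x = b e]
    = (\prod_(e <- s) (if b e then p else 1 - p))%:E.

Definition cond_expect d (T : measurableType d) (R : realType)
    (P : probability T R) (f : T -> \bar R) (A : set T) : \bar R :=
  ((\int[P]_(x in A) f x) * ((fine (P A))^-1)%:E)%E.

(* Main.v *)
Require Import Defs.
From HB Require Import structures.
From mathcomp Require Import all_boot all_order all_algebra.
From mathcomp Require Import all_classical all_reals all_analysis.
From mathcomp Require Import measurable_realfun.
From mathcomp Require Import zify ring lra.
Import Order.TTheory GRing.Theory Num.Theory.
Local Open Scope classical_set_scope.
Local Open Scope ring_scope.
Set Implicit Arguments. Unset Strict Implicit. Unset Printing Implicit Defensive.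
Definition upd (w : edge -> bool) (e : edge) (b : bool) : edge -> bool :=
  fun e' => if e' == e then b else w e'.

Section Ex.
Variable R : realType.
Variable p : R.
Hypothesis p0 : 0 <= p.
Hypothesis p1 : p <= 1.

Fixpoint Ex (s : seq edge) (f : (edge -> bool) -> R) : R :=
  match s with
  | [::] => f (fun _ => true)
  | e :: s' => p * Ex s' (fun w => f (upd w e true))
               + (1 - p) * Ex s' (fun w => f (upd w e false))
  end.

Lemma Ex_le s f g : (forall w, f w <= g w) -> Ex s f <= Ex s g.
Proof.
elim: s f g => [|e s IH] f g fg /=; first exact: fg.
have q0 : 0 <= 1 - p by rewrite subr_ge0.
apply: lerD; apply: ler_wpM2l => //; apply: IH => w; exact: fg.
Qed.

Lemma Ex_ge0 s f : (forall w, 0 <= f w) -> 0 <= Ex s f.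
Proof.
elim: s f => [|e s IH] f f0 /=; first exact: f0.
have q0 : 0 <= 1 - p by rewrite subr_ge0.
by apply: addr_ge0; apply: mulr_ge0 => //; apply: IH.
Qed.

Lemma ExD s f g : Ex s (fun w => f w + g w) = Ex s f + Ex s g.
Proof.
elim: s f g => [|e s IH] f g //=.
rewrite (IH (fun w => f (upd w e true))) (IH (fun w => f (upd w e false))).
ring.
Qed.

Lemma ExZ s k f : Ex s (fun w => k * f w) = k * Ex s f.
Proof.
elim: s f => [|e s IH] f //=.
rewrite (IH (fun w => f (upd w e true))) (IH (fun w => f (upd w e false))).
ring.
Qed.

Lemma Ex_cst s k : Ex s (fun _ => k) = k.
Proof. elim: s => [|e s IH] //=; rewrite IH; ring. Qed.

Lemma Ex_lb s f : (forall w, 0 <= f w) -> p ^+ size s * f (fun _ => true) <= Ex s f.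
Proof.
elim: s f => [|e s IH] f f0 /=; first by rewrite expr0 mul1r.
have q0 : 0 <= 1 - p by rewrite subr_ge0.
have -> : f (fun _ => true) = f (upd (fun _ => true) e true).
  by congr f; apply: funext => e'; rewrite /upd; case: ifP.
rewrite exprS -mulrA -[X in X <= _]addr0; apply: lerD.
  by apply: ler_wpM2l => //; apply: (IH (fun w => f (upd w e true))).
by apply: mulr_ge0 => //; apply: Ex_ge0.
Qed.

Definition monob (f : (edge -> bool) -> R) :=
  forall w w', (forall e, w e ==> w' e) -> f w <= f w'.
Definition antib (f : (edge -> bool) -> R) :=
  forall w w', (forall e, w e ==> w' e) -> f w' <= f w.

Lemma upd_mono w w' e b : (forall e, w e ==> w' e) -> forall e', upd w e b e' ==> upd w' e b e'.
Proof. by move=> H e'; rewrite /upd; case: ifP => // _; rewrite implybb. Qed.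

Lemma upd_mono_b w e e' : upd w e false e' ==> upd w e true e'.
Proof. by rewrite /upd; case: ifP => // _; apply/implyP. Qed.

Lemma harris s f g : monob f -> antib g ->
  Ex s (fun w => f w * g w) <= Ex s f * Ex s g.
Proof.
elim: s f g => [|e s IH] f g mf ag /=; first by [].
set f1 := fun w => f (upd w e true); set f0 := fun w => f (upd w e false).
set g1 := fun w => g (upd w e true); set g0 := fun w => g (upd w e false).
have mf1 : monob f1 by move=> w w' ww'; apply: mf; apply: upd_mono.
have mf0 : monob f0 by move=> w w' ww'; apply: mf; apply: upd_mono.
have ag1 : antib g1 by move=> w w' ww'; apply: ag; apply: upd_mono.
have ag0 : antib g0 by move=> w w' ww'; apply: ag; apply: upd_mono.
have H1 := IH f1 g1 mf1 ag1.
have H0 := IH f0 g0 mf0 ag0.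
have Hf : Ex s f0 <= Ex s f1 by apply: Ex_le => w; apply: mf => e'; exact: upd_mono_b.
have Hg : Ex s g1 <= Ex s g0 by apply: Ex_le => w; apply: ag => e'; exact: upd_mono_b.
have q0 : 0 <= 1 - p by rewrite subr_ge0.
apply: (@le_trans _ _ (p * (Ex s f1 * Ex s g1) + (1 - p) * (Ex s f0 * Ex s g0))).
  by apply: lerD; apply: ler_wpM2l.
set A1 := Ex s f1 in Hf *; set A0 := Ex s f0 in Hf *.
set B1 := Ex s g1 in Hg *; set B0 := Ex s g0 in Hg *.
have pq : 0 <= p * (1 - p) by apply: mulr_ge0.
have : 0 <= p * (1 - p) * ((A1 - A0) * (B0 - B1)).
  by apply: mulr_ge0 => //; apply: mulr_ge0; rewrite subr_ge0.
move=> H; rewrite -subr_ge0; apply: le_trans H _; rewrite le_eqVlt; apply/orP; left.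
apply/eqP; ring.
Qed.

End Ex.

Section Integ.
Context d (T : measurableType d) (R : realType) (P : probability T R).
Variables (X : edge -> T -> bool) (S : pred edge) (p : R).
Hypothesis HX : iid_bernoulli P S p X.

Definition wt (b : bool) : R := if b then p else 1 - p.
Definition Gs (t : seq edge) (c : edge -> bool) : set T :=
  [set x | forall e, e \in t -> X e x = c e].
Definition dep (s : seq edge) (f : (edge -> bool) -> R) :=
  forall w w', (forall e, e \in s -> w e = w' e) -> f w = f w'.

Lemma mX e : measurable_fun setT (X e).
Proof.
apply: (measurable_fun_bool true); rewrite setTI.
have -> : X e @^-1` [set true] = [set x | X e x] by apply/seteqP; split => x /=.
exact: HX.1.
Qed.

Lemma mGs t c : measurable (Gs t c).
Proof.
elim: t => [|e t IH].
  have -> : Gs [::] c = setT by apply/seteqP; split => x //= _ e; rewrite in_nil.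
  exact: measurableT.
have -> : Gs (e :: t) c = (setT `&` X e @^-1` [set c e]) `&` Gs t c.
  apply/seteqP; split => x /=.
    move=> H; split; first by split => //; apply: H; rewrite mem_head.
    by move=> e' He'; apply: H; rewrite in_cons He' orbT.
  by move=> [[_ H1] H2] e'; rewrite in_cons => /orP [/eqP ->|]; [exact: H1|exact: H2].
apply: measurableI => //; apply: mX => //.
Qed.

Lemma meas_f s f : dep s f -> measurable_fun [set: T] ((fun x => (f (X^~ x))%:E) : T -> \bar R).
Proof.
elim: s f => [|e s IH] f df.
  have -> : (fun x => (f (X^~ x))%:E) = cst (f (fun _ => true))%:E.
    by apply: funext => x; rewrite (df _ (fun _ => true)).
  exact: measurable_cst.
have -> : (fun x => (f (X^~ x))%:E) = fun x => if X e x then (f (upd (X^~ x) e true))%:E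
                                         else (f (upd (X^~ x) e false))%:E.
  apply: funext => x; case E: (X e x); congr EFin; congr f; apply: funext => e';
  by rewrite /upd; case: eqP => // ->.
have dupd b : dep s (fun w => f (upd w e b)).
  move=> w w' H; apply: df => e'; rewrite /upd; case: eqP => // ne.
  by rewrite in_cons => /orP [/eqP //|]; exact: H.
apply: (measurable_fun_ifT (mX e)); [exact: (IH _ (dupd true)) | exact: (IH _ (dupd false))].
Qed.

Lemma int_Gs s : uniq s -> all S s -> forall t c f, uniq t -> all S t ->
  all (fun e => e \notin s) t -> dep s f ->
  (\int[P]_(x in Gs t c) (f (X^~ x))%:E = ((\prod_(e <- t) wt (c e)) * Ex p s f)%R%:E)%E.
Proof.
elim: s => [|e s IH] us aS t c f ut aSt dst df.
  rewrite /=.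
  transitivity (\int[P]_(x in Gs t c) (cst (f (fun _ => true))%:E x))%E.
    by apply: eq_integral => x _; rewrite /= (df _ (fun _ => true)).
  rewrite integral_cst; last exact: mGs.
  transitivity ((f (fun _ => true))%:E * (\prod_(e <- t) wt (c e))%:E)%E;
    last by rewrite -EFinM mulrC.
  congr (_ * _)%E; exact: (HX.2 t c ut aSt).
move: us aS => /= /andP [es us] /andP [Se aS].
have et : e \notin t.
  apply/negP => He; move/allP: dst => /(_ e He); by rewrite in_cons eqxx.
have hset : Gs t c = Gs (e :: t) (upd c e true) `|` Gs (e :: t) (upd c e false).
  apply/seteqP; split => x /=.
    move=> H; case E: (X e x); [left|right] => e'; rewrite in_cons /upd;
    (case: eqP => [-> //|ne] /=; [exact: H]).
  have key b : Gs (e :: t) (upd c e b) x -> Gs t c x.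
    move=> H e' He'; rewrite (H e'); last by rewrite in_cons He' orbT.
    rewrite /upd; case: eqP => // Eq; by move: et; rewrite -Eq He'.
  by case; apply: key.
have hdisj : [disjoint Gs (e :: t) (upd c e true) & Gs (e :: t) (upd c e false)].
  apply/disj_set2P; apply/seteqP; split => x //= [H1 H2].
  have := H1 e (mem_head _ _); rewrite (H2 e (mem_head _ _)) /upd eqxx //.
have dupd b : dep s (fun w => f (upd w e b)).
  move=> w w' H; apply: df => e'; rewrite /upd; case: eqP => // ne.
  by rewrite in_cons => /orP [/eqP //|]; exact: H.
have piece b : (\int[P]_(x in Gs (e :: t) (upd c e b)) (f (X^~ x))%:E
     = ((wt b * \prod_(e' <- t) wt (c e')) * Ex p s (fun w => f (upd w e b)))%R%:E)%E.
  transitivity (\int[P]_(x in Gs (e :: t) (upd c e b)) (f (upd (X^~ x) e b))%:E)%E.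
    apply: eq_integral => x; rewrite inE => Hx; congr EFin; congr f.
    apply: funext => e'; rewrite /upd; case: eqP => // ->.
    by rewrite (Hx e (mem_head _ _)) /upd eqxx.
  rewrite (IH us aS (e :: t) (upd c e b) (fun w => f (upd w e b))) //.
  - congr EFin; congr (_ * _); rewrite big_cons /upd eqxx; congr (_ * _).
    apply: eq_big_seq => e' He'; case: eqP => // Eq; by move: et; rewrite -Eq He'.
  - by rewrite /= et.
  - by rewrite /= Se.
  - rewrite /= es /=; apply/allP => e' He'; move/allP: dst => /(_ e' He').
    by rewrite in_cons negb_or => /andP [].
rewrite hset integral_setU //; first last.
- apply: measurable_funS (meas_f df) => //.
- exact: mGs.
- exact: mGs.
rewrite !piece -EFinD /wt; congr EFin; ring.
Qed.

End Integ.

Section Comb.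
Variable K : nat.
Hypothesis K1 : (1 <= K)%N.
Variable w : edge -> bool.

Definition ihp (i : nat) (y : int) : nat := if w (true, i%:Z, y) then 1%N else 3%N.

Fixpoint Fp (i : nat) (y : int) : nat :=
  match i with
  | 0 => absz y
  | i'.+1 => minn (Fp i' y + ihp i' y)%N
        (minn (if inrow K (y - 1) then (Fp i' (y - 1) + 2)%N else (Fp i' y + 3)%N)
              (if inrow K (y + 1) then (Fp i' (y + 1) + 2)%N else (Fp i' y + 3)%N))
  end.

Lemma minn_cases (a b : nat) : minn a b = a \/ minn a b = b.
Proof. rewrite /minn; case: ifP; auto. Qed.

Lemma FpS_le1 i y : (Fp i.+1 y <= Fp i y + ihp i y)%N.
Proof. by rewrite /= geq_min leqnn. Qed.

Lemma FpS_le2 i y : inrow K (y - 1) -> (Fp i.+1 y <= Fp i (y - 1) + 2)%N.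
Proof. by move=> h; rewrite /= h !geq_min leqnn orbT. Qed.

Lemma FpS_le3 i y : inrow K (y + 1) -> (Fp i.+1 y <= Fp i (y + 1) + 2)%N.
Proof. by move=> h; rewrite /= h !geq_min leqnn !orbT. Qed.

Lemma FpS_le4 i y : (Fp i.+1 y <= Fp i y + 3)%N.
Proof.
rewrite /= !geq_min; apply/orP; left; rewrite leq_add2l /ihp; by case: (w _).
Qed.

Lemma FpS_cases i y :
  [\/ Fp i.+1 y = (Fp i y + ihp i y)%N,
      inrow K (y - 1) /\ Fp i.+1 y = (Fp i (y - 1) + 2)%N,
      inrow K (y + 1) /\ Fp i.+1 y = (Fp i (y + 1) + 2)%N |
      Fp i.+1 y = (Fp i y + 3)%N].
Proof.
rewrite /=.
set B := (if inrow K (y - 1) then _ else _).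
set C := (if inrow K (y + 1) then _ else _).
case: (minn_cases (Fp i y + ihp i y)%N (minn B C)) => ->; first by constructor 1.
case: (minn_cases B C) => ->; rewrite /B /C; case: ifP => h.
- by constructor 2.
- by constructor 4.
- by constructor 3.
- by constructor 4.
Qed.

Definition lip_at i := forall y, inrow K y -> inrow K (y + 1) ->
  (Fp i (y + 1) <= Fp i y + 1)%N /\ (Fp i y <= Fp i (y + 1) + 1)%N.

Lemma succ_ge i : lip_at i -> forall y, inrow K y -> (Fp i y + 1 <= Fp i.+1 y)%N.
Proof.
move=> L y hy; rewrite /= !leq_min; apply/and3P; split.
- by rewrite leq_add2l /ihp; case: (w _).
- case: ifP => h; last by rewrite leq_add2l.
  have := L (y - 1) h; rewrite subrK => /(_ hy) [a _]; lia.
- case: ifP => h; last by rewrite leq_add2l.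
  have := L y hy h => [[_ a]]; lia.
Qed.

Lemma lip_all i : lip_at i.
Proof.
elim: i => [|i IH] y hy hy1.
  rewrite /=; move: hy hy1; rewrite /inrow => /andP [h1 h2] /andP [h3 h4]; lia.
have G := succ_ge IH.
split.
- have := @FpS_le2 i (y + 1); rewrite addrK => /(_ hy) a.
  have := G y hy; lia.
- move: (@FpS_le3 i y hy1) => a.
  have b := G (y + 1) hy1; apply: (leq_trans a); rewrite -[2%N]/(1 + 1)%N addnA leq_add2r; exact: b.
Qed.

Lemma lip2 i y y' : inrow K y -> inrow K y' -> (y' = y + 1 \/ y' = y - 1) ->
  (Fp i y' <= Fp i y + 1)%N.
Proof.
move=> hy hy' [E|E]; subst y'.
  by have [] := lip_all i hy hy'.
have hy2 : inrow K (y - 1 + 1) by rewrite subrK.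
have [_] := lip_all i hy' hy2; by rewrite subrK.
Qed.

Lemma succ_ge' i y : inrow K y -> (Fp i y + 1 <= Fp i.+1 y)%N.
Proof. exact: succ_ge (lip_all i) y. Qed.

End Comb.

Lemma edge_ofP (u v : vtx) e : edge_of u v = Some e ->
  [\/ v = (u.1 + 1, u.2) /\ e = (true, u.1, u.2),
      u = (v.1 + 1, v.2) /\ e = (true, v.1, v.2),
      v = (u.1, u.2 + 1) /\ e = (false, u.1, u.2) |
      u = (v.1, v.2 + 1) /\ e = (false, v.1, v.2)].
Proof.
case: u v => x y [x' y']; rewrite /edge_of /=.
case: ifP => [/andP [/eqP -> /eqP ->] [<-]|_]; first by constructor 1.
case: ifP => [/andP [/eqP -> /eqP ->] [<-]|_]; first by constructor 2.
case: ifP => [/andP [/eqP -> /eqP ->] [<-]|_]; first by constructor 3.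
case: ifP => [/andP [/eqP -> /eqP ->] [<-]|_] //; first by constructor 4.
Qed.

Lemma cw_h (x y : int) : cross_wt (x, y) (x + 1, y) = 1%N.
Proof. by rewrite /cross_wt /is_diag /= subrr normr0 andbF. Qed.
Lemma cw_hl (x y : int) : cross_wt (x + 1, y) (x, y) = 1%N.
Proof. by rewrite /cross_wt /is_diag /= subrr normr0 andbF. Qed.
Lemma cw_v (x y : int) : cross_wt (x, y) (x, y + 1) = 1%N.
Proof. by rewrite /cross_wt /is_diag /= subrr normr0. Qed.
Lemma cw_vd (x y : int) : cross_wt (x, y + 1) (x, y) = 1%N.
Proof. by rewrite /cross_wt /is_diag /= subrr normr0. Qed.

Definition clampc (n : nat) (x : int) : nat :=
  match x with Posz m => minn m n | Negz _ => 0%N end.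

Lemma clamp_spec n x : (x < 0 /\ clampc n x = 0%N) \/
  (0 <= x /\ x <= n%:Z /\ x = (clampc n x)%:Z) \/ (n%:Z < x /\ clampc n x = n).
Proof. case: x => [m|m] /=; last by left. rewrite /minn; case: ifP => h; lia. Qed.

Lemma clamp_adj n x : clampc n (x + 1) = clampc n x \/
  (clampc n (x + 1) = (clampc n x).+1 /\ x = (clampc n x)%:Z /\ (clampc n x < n)%N).
Proof. have := clamp_spec n x; have := clamp_spec n (x + 1); lia. Qed.

Section Pot.
Variable K : nat.
Hypothesis K1 : (1 <= K)%N.
Variable w : edge -> bool.
Variable n : nat.

Definition phi (v : vtx) : nat := Fp K w (clampc n v.1) v.2.

Lemma step_pot u v : cross_step K w u v ->
  [/\ inrow K u.2, inrow K v.2 & (phi v <= phi u + cross_wt u v)%N].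
Proof.
case: u v => x y [x' y']; rewrite /cross_step /phi /=.
case/orP.
  case E: (edge_of (x, y) (x', y')) => [e|] //.
  case/edge_ofP: E => /= [[[-> ->] ->]|[[-> ->] ->]|[[-> ->] ->]|[[-> ->] ->]] /=;
    rewrite /inZK /=.
  - rewrite cw_h => /andP [hy hw]; split => //.
    case: (clamp_adj n x) => [->|[-> [Ex hc]]]; first by rewrite leq_addr.
    apply: leq_trans (FpS_le1 _ _ _ _) _.
    by rewrite /ihp -Ex hw.
  - rewrite cw_hl => /andP [hy _]; split => //.
    case: (clamp_adj n x') => [->|[-> _]]; first by rewrite leq_addr.
    have := @succ_ge' K K1 w (clampc n x') y' hy; lia.
  - rewrite cw_v andbT => /andP [hy hy1]; split => //.
    exact: (@lip2 K K1 w _ y (y + 1) hy hy1 (or_introl erefl)).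
  - rewrite cw_vd andbT => /andP [hy hy1]; split => //.
    apply: (@lip2 K K1 w _ (y' + 1) y' hy1 hy); right; by rewrite addrK.
rewrite /diag_step /= => /andP [/andP [dg hy] hy'].
have -> : cross_wt (x, y) (x', y') = 2%N by rewrite /cross_wt dg.
split => //.
move: dg; rewrite /is_diag /= => /andP [/eqP dx /eqP dy].
have hyy : y' = y + 1 \/ y' = y - 1 by lia.
have hlip i := @lip2 K K1 w i _ _ hy hy' hyy.
have [Ex|Ex] : x' = x + 1 \/ x = x' + 1 by lia.
  subst x'.
  case: (clamp_adj n x) => [->|[-> _]]; first by have := hlip (clampc n x); lia.
  case: hyy => Ey; subst y'.
    by apply: leq_trans (@FpS_le2 K w _ _ _) _; rewrite addrK.
  by apply: leq_trans (@FpS_le3 K w _ _ _) _; rewrite subrK.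
subst x.
case: (clamp_adj n x') => [->|[-> _]]; first by have := hlip (clampc n x'); lia.
have := hlip (clampc n x'); have := @succ_ge' K K1 w (clampc n x') y hy; lia.
Qed.

Lemma path_pot p a : inrow K a.2 -> path (cross_step K w) a p ->
  (phi (last a p) <= phi a + sumn (pairmap cross_wt a p))%N.
Proof.
elim: p a => [|v p IH] a ha /=; first by rewrite addn0.
case/andP => st pth.
case: (step_pot st) => _ hv hs.
have := IH v hv pth; lia.
Qed.

End Pot.

Lemma eo_r (x y : int) : edge_of (x, y) (x + 1, y) = Some (true, x, y).
Proof. by rewrite /edge_of /= !eqxx. Qed.
Lemma eo_l (x y : int) : edge_of (x + 1, y) (x, y) = Some (true, x, y).
Proof.
have h1 : (x == x + 1 + 1) = false by apply/eqP; lia.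
by rewrite /edge_of /= h1 /= !eqxx.
Qed.
Lemma eo_u (x y : int) : edge_of (x, y) (x, y + 1) = Some (false, x, y).
Proof.
have h1 : (x == x + 1) = false by apply/eqP; lia.
by rewrite /edge_of /= h1 /= !eqxx.
Qed.
Lemma eo_d (x y : int) : edge_of (x, y + 1) (x, y) = Some (false, x, y).
Proof.
have h1 : (x == x + 1) = false by apply/eqP; lia.
have h2 : (y == y + 1 + 1) = false by apply/eqP; lia.
by rewrite /edge_of /= h1 h2 /= !eqxx andbF.
Qed.

Section Std.
Variable K : nat.
Hypothesis K1 : (1 <= K)%N.
Variable w : edge -> bool.

Lemma ss_r x y : std_step K w (x, y) (x + 1, y) = inrow K y && w (true, x, y).
Proof. by rewrite /std_step eo_r. Qed.
Lemma ss_l x y : std_step K w (x + 1, y) (x, y) = inrow K y && w (true, x, y).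
Proof. by rewrite /std_step eo_l. Qed.
Lemma ss_u x y : std_step K w (x, y) (x, y + 1) = inrow K y && inrow K (y + 1) && w (false, x, y).
Proof. by rewrite /std_step eo_u. Qed.
Lemma ss_d x y : std_step K w (x, y + 1) (x, y) = inrow K y && inrow K (y + 1) && w (false, x, y).
Proof. by rewrite /std_step eo_d. Qed.

Definition stdP (a b : vtx) (m : nat) := exists p,
  [/\ path (std_step K w) a p, last a p = b & (size p <= m)%N].

Lemma stdP_trans a b c m1 m2 : stdP a b m1 -> stdP b c m2 -> stdP a c (m1 + m2).
Proof.
move=> [p [h1 h2 h3]] [q [g1 g2 g3]]; exists (p ++ q); split.
- by rewrite cat_path h1 h2.
- by rewrite last_cat h2.
- by rewrite size_cat leq_add.
Qed.

Lemma stdP_mono a b m m' : (m <= m')%N -> stdP a b m -> stdP a b m'.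
Proof. by move=> h [p [h1 h2 h3]]; exists p; split => //; apply: leq_trans h. Qed.

Lemma stdP_step a b : std_step K w a b -> stdP a b 1.
Proof. by move=> h; exists [:: b]; rewrite /= h. Qed.

Lemma sq4 (a b c d : bool) : (~~ a + ~~ b + ~~ c + ~~ d <= 1)%N ->
  [/\ ~~ a -> b && c && d, ~~ b -> a && c && d, ~~ c -> a && b && d & ~~ d -> a && b && c].
Proof. by case: a; case: b; case: c; case: d. Qed.

Variable n : nat.
Hypothesis HA : goodA K n w.

Section Square.
Variables (i : nat) (j : int).
Hypothesis hi : (i < n)%N.
Hypothesis hj1 : - (K%:Z) <= j.
Hypothesis hj2 : j < K%:Z.
Let x := i%:Z.
Let rj : inrow K j.
Proof. rewrite /inrow; apply/andP; split; lia. Qed.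
Let rj1 : inrow K (j + 1).
Proof. rewrite /inrow; apply/andP; split; lia. Qed.
Let S4 := sq4 (HA hi hj1 hj2).

Lemma sq_up_left : stdP (x, j) (x, j + 1) 3.
Proof.
case hc: (w (false, x, j)).
  by apply: (stdP_mono (isT : (1 <= 3)%N)); apply: stdP_step; rewrite ss_u rj rj1 hc.
case: S4 => _ _ /(_ (negbT hc)) /andP [/andP [ha hb] hd] _.
exists [:: (x + 1, j); (x + 1, j + 1); (x, j + 1)]; split => //=.
by rewrite ss_r ss_u ss_l rj rj1 ha hb hd.
Qed.

Lemma sq_down_left : stdP (x, j + 1) (x, j) 3.
Proof.
case hc: (w (false, x, j)).
  by apply: (stdP_mono (isT : (1 <= 3)%N)); apply: stdP_step; rewrite ss_d rj rj1 hc.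
case: S4 => _ _ /(_ (negbT hc)) /andP [/andP [ha hb] hd] _.
exists [:: (x + 1, j + 1); (x + 1, j); (x, j)]; split => //=.
by rewrite ss_r ss_d ss_l rj rj1 ha hb hd.
Qed.

Lemma sq_right_bot : stdP (x, j) (x + 1, j) 3.
Proof.
case ha: (w (true, x, j)).
  by apply: (stdP_mono (isT : (1 <= 3)%N)); apply: stdP_step; rewrite ss_r rj ha.
case: S4 => /(_ (negbT ha)) /andP [/andP [hb hc] hd] _ _ _.
exists [:: (x, j + 1); (x + 1, j + 1); (x + 1, j)]; split => //=.
by rewrite ss_u ss_r ss_d rj rj1 hb hc hd.
Qed.

Lemma sq_right_top : stdP (x, j + 1) (x + 1, j + 1) 3.
Proof.
case hb: (w (true, x, j + 1)).
  by apply: (stdP_mono (isT : (1 <= 3)%N)); apply: stdP_step; rewrite ss_r rj1 hb.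
case: S4 => _ /(_ (negbT hb)) /andP [/andP [ha hc] hd] _ _.
exists [:: (x, j); (x + 1, j); (x + 1, j + 1)]; split => //=.
by rewrite ss_d ss_r ss_u rj rj1 ha hc hd.
Qed.

Lemma sq_diag_up : stdP (x, j) (x + 1, j + 1) 2.
Proof.
case ha: (w (true, x, j)); case hd: (w (false, x + 1, j)).
- exists [:: (x + 1, j); (x + 1, j + 1)]; split => //=.
  by rewrite ss_r ss_u rj rj1 ha hd.
- case: S4 => _ _ _ /(_ (negbT hd)) /andP [/andP [_ hb] hc].
  exists [:: (x, j + 1); (x + 1, j + 1)]; split => //=.
  by rewrite ss_u ss_r rj rj1 hb hc.
- case: S4 => /(_ (negbT ha)) /andP [/andP [hb hc] _] _ _ _.
  exists [:: (x, j + 1); (x + 1, j + 1)]; split => //=.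
  by rewrite ss_u ss_r rj rj1 hb hc.
- by case: S4 => /(_ (negbT ha)) /andP [/andP [hb hc] hd'] _ _ _; rewrite hd' in hd.
Qed.

Lemma sq_diag_down : stdP (x, j + 1) (x + 1, j) 2.
Proof.
case hb: (w (true, x, j + 1)); case hd: (w (false, x + 1, j)).
- exists [:: (x + 1, j + 1); (x + 1, j)]; split => //=.
  by rewrite ss_r ss_d rj rj1 hb hd.
- case: S4 => _ _ _ /(_ (negbT hd)) /andP [/andP [ha _] hc].
  exists [:: (x, j); (x + 1, j)]; split => //=.
  by rewrite ss_d ss_r rj rj1 ha hc.
- case: S4 => _ /(_ (negbT hb)) /andP [/andP [ha hc] _] _ _.
  exists [:: (x, j); (x + 1, j)]; split => //=.
  by rewrite ss_d ss_r rj rj1 ha hc.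
- by case: S4 => _ /(_ (negbT hb)) /andP [/andP [ha hc] hd'] _ _; rewrite hd' in hd.
Qed.

End Square.

End Std.

Section Up.
Variable K : nat.
Hypothesis K1 : (1 <= K)%N.
Variable w : edge -> bool.
Variable n : nat.
Hypothesis HA : goodA K n w.
Hypothesis n1 : (0 < n)%N.

Lemma col0 m : (m <= K)%N ->
  stdP K w (0, 0) (0, m%:Z) (3 * m) /\ stdP K w (0, 0) (0, - m%:Z) (3 * m).
Proof.
elim: m => [|m IH] hm.
  by split; exists [::]; split => //=; rewrite oppr0.
have [IH1 IH2] := IH (ltnW hm).
split.
  have := stdP_trans IH1 (@sq_up_left K K1 w n HA 0 m%:Z n1 _ _).
  have -> : m%:Z + 1 = (m.+1)%:Z by lia.
  rewrite mulnS addnC; apply; lia.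
have := @sq_down_left K K1 w n HA 0 (- (m.+1)%:Z) n1.
have -> : - (m.+1)%:Z + 1 = - m%:Z by lia.
move=> H; have := stdP_trans IH2 (H _ _); rewrite mulnS addnC; apply; lia.
Qed.

Lemma right3 c y : (c < n)%N -> inrow K y -> stdP K w (c%:Z, y) (c%:Z + 1, y) 3.
Proof.
move=> hc; rewrite /inrow => /andP [h1 h2].
have [hy|hy] := ltP y K%:Z.
  exact: (@sq_right_bot K K1 w n HA c y hc h1 hy).
have := @sq_right_top K K1 w n HA c (y - 1) hc.
rewrite subrK; apply; lia.
Qed.

Lemma up_bound c : (c <= n)%N -> forall y, inrow K y ->
  stdP K w (0, 0) (c%:Z, y) (Fp K w c y + 2 * K).
Proof.
elim: c => [|c IH] hc y hy.
  move: hy; rewrite /inrow => /andP [h1 h2].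
  case: y h1 h2 => [m|m] h1 h2 /=.
    have hm : (m <= K)%N by lia.
    have [H _] := col0 hm.
    by apply: stdP_mono H; lia.
  have hm : (m.+1 <= K)%N by lia.
  have [_ H] := col0 hm.
  rewrite NegzE; by apply: stdP_mono H; lia.
have hcn : (c < n)%N by [].
have IH' := IH (ltnW hc).
have Ec : (c.+1)%:Z = c%:Z + 1 by lia.
rewrite Ec.
case: (FpS_cases K w c y) => [E|[hy' E]|[hy' E]|E]; rewrite E.
- have H : stdP K w (c%:Z, y) (c%:Z + 1, y) (ihp w c y).
    rewrite /ihp; case hw: (w _); last exact: right3.
    by apply: stdP_step; rewrite ss_r hy hw.
  have := stdP_trans (IH' y hy) H; apply: stdP_mono; lia.
- have := @sq_diag_up K K1 w n HA c (y - 1) hcn.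
  move: (hy') (hy); rewrite /inrow => /andP [h1 h2] /andP [h3 h4].
  rewrite subrK => H.
  have h5 : y - 1 < K%:Z by lia.
  have := stdP_trans (IH' _ hy') (H h1 h5); apply: stdP_mono; lia.
- have := @sq_diag_down K K1 w n HA c y hcn.
  move: (hy') (hy); rewrite /inrow => /andP [h1 h2] /andP [h3 h4] H.
  have h5 : y < K%:Z by lia.
  have := stdP_trans (IH' _ hy') (H h3 h5); apply: stdP_mono; lia.
- have := stdP_trans (IH' y hy) (right3 hcn hy); apply: stdP_mono; lia.
Qed.

End Up.

Lemma sumn_unit (a : vtx) p : sumn (pairmap unit_wt a p) = size p.
Proof. elim: p a => [|v p IH] a //=; by rewrite IH add1n. Qed.

Lemma inrow0 K : inrow K 0.
Proof. rewrite /inrow; apply/andP; split; lia. Qed.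

Section Bounds.
Variable R : realType.
Variable K : nat.
Hypothesis K1 : (1 <= K)%N.

Lemma DK_ge0 n w : (0 <= DK R K n w)%E.
Proof.
rewrite /DK /wdist; apply: (@le_ereal_inf_tmp R) => _ [p _ <-]; rewrite lee_fin; exact: ler0n.
Qed.

Lemma DK_upper n w : goodA K n w -> (DK R K n w <= ((Fp K w n 0 + 2 * K)%N%:R)%:E)%E.
Proof.
move=> HA; rewrite /DK /wdist; apply: (@ge_ereal_inf R).
case: n HA => [|n] HA.
  exists ((sumn (pairmap unit_wt (0, 0) [::]))%:R)%:E; last by rewrite lee_fin ler0n.
  by exists [::].
have [p [h1 h2 h3]] := @up_bound K K1 w n.+1 HA isT n.+1 (leqnn _) 0 (inrow0 K).
exists ((sumn (pairmap unit_wt (0, 0) p))%:R)%:E; first by exists p.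
by rewrite sumn_unit lee_fin ler_nat.
Qed.

Lemma DKd_lower n w : (((Fp K w n 0)%:R)%:E <= DKd R K n w)%E.
Proof.
rewrite /DKd /wdist; apply: (@le_ereal_inf_tmp R) => _ [p [hp hl] <-]; rewrite lee_fin ler_nat.
have := @path_pot K K1 w n p (0, 0) (inrow0 K) hp.
rewrite hl /phi /= minnn.
by rewrite min0n /= add0n.
Qed.

End Bounds.

Lemma minn_le2 (a b a' b' : nat) : (a <= a')%N -> (b <= b')%N -> (minn a b <= minn a' b')%N.
Proof. move=> h1 h2; rewrite leq_min !geq_min h1 h2 orbT /=; by []. Qed.

Lemma Fp_anti K w w' : (forall e, w e ==> w' e) -> forall c y, (Fp K w' c y <= Fp K w c y)%N.
Proof.
move=> H; elim=> [|c IH] y //=.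
apply: minn_le2.
  rewrite leq_add // /ihp; move: (H (true, c%:Z, y)).
  by case: (w _); case: (w' _).
apply: minn_le2; case: (inrow K _); by rewrite leq_add.
Qed.

Lemma Fp_dep K n w w' : (forall (i : nat) y, (i < n)%N -> inrow K y ->
     w (true, i%:Z, y) = w' (true, i%:Z, y)) ->
  forall c, (c <= n)%N -> forall y, inrow K y -> Fp K w c y = Fp K w' c y.
Proof.
move=> H; elim=> [|c IH] // hc y hy /=.
rewrite /ihp (H c y hc hy) (IH (ltnW hc) y hy).
case h1: (inrow K (y - 1)); first rewrite (IH (ltnW hc) _ h1).
  case h2: (inrow K (y + 1)); first by rewrite (IH (ltnW hc) _ h2).
  by [].
case h2: (inrow K (y + 1)); first by rewrite (IH (ltnW hc) _ h2).
by [].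
Qed.

Lemma goodA_mono K n w w' : (forall e, w e ==> w' e) -> goodA K n w -> goodA K n w'.
Proof.
move=> H G i j hi hj1 hj2; apply: leq_trans (G i j hi hj1 hj2).
have h e : (~~ w' e <= ~~ w e)%N by move: (H e); case: (w e); case: (w' e).
by rewrite !leq_add.
Qed.

Lemma goodA_dep K n w w' : (forall (i : nat) j, (i < n)%N -> - (K%:Z) <= j -> j < K%:Z ->
   [/\ w (true, i%:Z, j) = w' (true, i%:Z, j), w (true, i%:Z, j + 1) = w' (true, i%:Z, j + 1),
       w (false, i%:Z, j) = w' (false, i%:Z, j) & w (false, i%:Z + 1, j) = w' (false, i%:Z + 1, j)]) ->
  goodA K n w -> goodA K n w'.
Proof.
move=> H G i j hi hj1 hj2; have [<- <- <- <-] := H i j hi hj1 hj2.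
exact: G.
Qed.

Definition rowsK (K : nat) : seq int := [seq (k%:Z - K%:Z) | k <- iota 0 (K + K).+1].

Definition box (K n : nat) : seq edge :=
  undup [seq e <- flatten [seq flatten [seq [seq (b, i%:Z, j) | j <- rowsK K]
                                      | i <- iota 0 n.+1] | b <- [:: true; false]]
        | inZK K e].

Lemma mem_rowsK K j : inrow K j -> j \in rowsK K.
Proof.
rewrite /inrow => /andP [h1 h2]; apply/mapP; exists (absz (j + K%:Z)).
  rewrite mem_iota; lia.
lia.
Qed.

Lemma mem_box K n (b : bool) (i : nat) j : (i <= n)%N -> inrow K j -> inZK K (b, i%:Z, j) ->
  (b, i%:Z, j) \in box K n.
Proof.
move=> hi hj hz; rewrite mem_undup mem_filter hz andTb.
apply/flattenP; exists (flatten [seq [seq (b, i0%:Z, j0) | j0 <- rowsK K] | i0 <- iota 0 n.+1]).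
  by apply/mapP; exists b => //; case: b {hz}.
apply/flattenP; exists [seq (b, i%:Z, j0) | j0 <- rowsK K].
  apply/mapP; exists i => //; rewrite mem_iota; lia.
by apply/mapP; exists j => //; apply: mem_rowsK.
Qed.

Lemma ge0_le_integral_nm d (T : measurableType d) (R : realType)
  (mu : {measure set T -> \bar R}) (D : set T) (f1 f2 : T -> \bar R) :
  (forall x, D x -> 0 <= f1 x)%E -> (forall x, D x -> f1 x <= f2 x)%E ->
  (\int[mu]_(x in D) f1 x <= \int[mu]_(x in D) f2 x)%E.
Proof.
move=> f10 f12.
have f20 : (forall x, D x -> 0 <= f2 x)%E.
  by move=> x Dx; apply: le_trans (f10 x Dx) (f12 x Dx).
rewrite (ge0_integralE _ f10) (ge0_integralE _ f20).
apply: ereal_sup_le => _ [h /= hf <-]; exists h => //= x.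
apply: le_trans (hf x) _.
rewrite /patch; case: ifP => // /set_mem Dx; exact: f12.
Qed.

Theorem proposition7 (d : measure_display) (T : measurableType d) (R : realType)
    (P : probability T R) (X : edge -> T -> bool) (K n : nat) (eps : R) :
  (1 <= K)%N -> 0 < eps -> eps < 1 ->
  iid_bernoulli P (inZK K) (1 - eps) X ->
  (cond_expect P (fun x => DK R K n (X^~ x)) [set x | goodA K n (X^~ x)]
   <= \int[P]_x DKd R K n (X^~ x) + ((3 * K)%:R)%:E)%E.
Proof.
move=> K1 eps0 eps1 HX.
set p := 1 - eps.
have p0 : 0 <= p by rewrite /p; lra.
have p1 : p <= 1 by rewrite /p; lra.
have ppos : 0 < p by rewrite /p; lra.
set s := box K n.
have us : uniq s := undup_uniq _.
have aS : all (inZK K) s.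
  by apply/allP => e; rewrite mem_undup mem_filter => /andP [].
pose hR := fun w : edge -> bool => ((Fp K w n 0)%:R : R).
pose aR := fun w : edge -> bool => ((asbool (goodA K n w))%:R : R).
pose gR := fun w => aR w * (hR w + (2 * K)%:R).
have dh : dep s hR.
  move=> w w' H; rewrite /hR (@Fp_dep K n w w' _ n (leqnn n) 0 (inrow0 K)) //.
  move=> i y hi hy; apply: H; apply: mem_box => //; exact: ltnW.
have agA : forall w w', (forall e, e \in s -> w e = w' e) -> goodA K n w -> goodA K n w'.
  move=> w w' H; apply: goodA_dep => i j hi hj1 hj2.
  have rj : inrow K j by rewrite /inrow; apply/andP; split; lia.
  have rj1 : inrow K (j + 1) by rewrite /inrow; apply/andP; split; lia.
  have E1 : i%:Z + 1 = (i.+1)%:Z by lia.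
  split; apply: H.
  - by apply: mem_box => //; exact: ltnW.
  - by apply: mem_box => //; exact: ltnW.
  - by apply: mem_box => //=; [exact: ltnW | rewrite rj rj1].
  - by rewrite E1; apply: mem_box => //=; rewrite rj rj1.
have da : dep s aR.
  move=> w w' H; rewrite /aR.
  have E : goodA K n w <-> goodA K n w'.
    split; apply: agA => // e He; exact/esym/H.
  by rewrite (propext E).
have dg : dep s gR.
  by move=> w w' H; rewrite /gR (da w w' H) (dh w w' H).
have mono : monob aR.
  move=> w w' H; rewrite /aR ler_nat.
  case: (asboolP (goodA K n w)) => // G.
  by have := goodA_mono H G; case: asboolP.
have anti : antib hR.
  by move=> w w' H; rewrite /hR ler_nat; exact: Fp_anti.
have intT : forall f, dep s f -> (\int[P]_x (f (X^~ x))%:E = (Ex p s f)%:E)%E.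
  move=> f df.
  have := @int_Gs _ _ _ P X (inZK K) p HX s us aS [::] (fun _ => true) f isT isT isT df.
  rewrite big_nil mul1r => <-.
  congr integral; apply/seteqP; split => x //= _ e; by rewrite in_nil.
set A := [set x | goodA K n (X^~ x)].
have mA : measurable A.
  have := meas_f HX da measurableT (emeasurable_set1 1%E); rewrite setTI.
  have -> : (fun x => (aR (X^~ x))%:E) @^-1` [set 1%E] = A; last by [].
  apply/seteqP; split => x /=; rewrite /aR.
    by case: asboolP => // _ [] /eqP; rewrite mulr0n eq_sym oner_eq0.
  by move=> Ax; case: asboolP.
have PA : P A = (Ex p s aR)%:E.
  rewrite -(intT aR da).
  have := @integral_indic _ _ _ P setT measurableT A mA; rewrite setIT => <-.
  by apply: eq_integral => x _; rewrite indicE /aR.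
have Eall : aR (fun _ => true) = 1.
  rewrite /aR; case: asboolP => // H; exfalso; apply: H => i j _ _ _ //.
have EaR_pos : 0 < Ex p s aR.
  apply: lt_le_trans (@Ex_lb R p p0 p1 s aR _); last first.
    by move=> w; rewrite /aR ler0n.
  by rewrite Eall mulr1 exprn_gt0.
have Hg : Ex p s gR = Ex p s (fun w => aR w * hR w) + (2 * K)%:R * Ex p s aR.
  rewrite -ExZ -ExD; congr Ex; apply: funext => w; rewrite /gR; ring.
have Hh : Ex p s (fun w => aR w * hR w) <= Ex p s aR * Ex p s hR := harris p0 p1 s mono anti.
have I1 : (\int[P]_(x in A) DK R K n (X^~ x) <= (Ex p s gR)%:E)%E.
  rewrite -(intT gR dg) integral_mkcond.
  apply: ge0_le_integral_nm => x _.
    by rewrite /patch; case: ifP => // _; exact: DK_ge0.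
  rewrite /patch /gR /aR; case: ifP => Ax.
    have Ax' : goodA K n (X^~ x) by move: Ax; rewrite inE.
    case: asboolP => // _; rewrite mul1r.
    by have := DK_upper R K1 Ax'; rewrite natrD.
  by rewrite lee_fin; apply: mulr_ge0; [exact: ler0n | apply: addr_ge0; exact: ler0n].
have I2 : ((Ex p s hR)%:E <= \int[P]_x DKd R K n (X^~ x))%E.
  rewrite -(intT hR dh); apply: ge0_le_integral_nm => x _.
    by rewrite lee_fin ler0n.
  exact: DKd_lower.
rewrite /cond_expect PA /=.
have inv0 : (0 <= ((Ex p s aR)^-1)%:E)%E by rewrite lee_fin invr_ge0 ltW.
apply: le_trans (lee_wpmul2r inv0 I1) _.
rewrite -EFinM.
apply: (@le_trans _ _ (Ex p s hR + (2 * K)%:R)%:E).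
  rewrite lee_fin ler_pdivrMr // Hg; nra.
rewrite EFinD; apply: leeD => //; rewrite lee_fin ler_nat.
by rewrite leq_mul2r ltnW ?orbT.
Qed.
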